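(* Let $G$ be a graph with maximum degree $2$ and $k$ a positive integer. If $G$ has exactly one path component with at least $k-1$ vertices and $0\le s(G,P_k)\le k$, then $G$ has no cycle with more than $k$ vertices, and its unique path component with at least $k-1$ vertices has $s(G,P_k)+k-1$ vertices.
   Context: $P_k$ is the path with $k$ vertices; $s(G,H)$ is the number of vertex subsets $X\subseteq V(G)$ such that $G[X]$ is isomorphic to $H$. *)

(* Defs.v *)
(* A finite simple graph is a symmetric irreflexive
   relation e : rel T on a finType T. *)
From mathcomp Require Import all_boot.
Set Implicit Arguments. Unset Strict Implicit. Unset Printing Implicit Defensive.

Definition deg (T : finType) (e : rel T) (x : T) : nat := #|[set y | e x y]|.

Definition maxdeg (T : finType) (e : rel T) : nat := \max_(x : T) deg e x.

Definition path_rel (k : nat) : rel 'I_k :=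
  fun i j => (i.+1 == j :> nat) || (j.+1 == i :> nat).

Definition induced_iso (T U : finType) (e : rel T) (h : rel U) (X : {set T}) : bool :=
  [exists f : {ffun U -> T},
     [&& injectiveb f, (f @: [set: U]) == X &
         [forall u, forall v, e (f u) (f v) == h u v]]].

Definition s_count (T U : finType) (e : rel T) (h : rel U) : nat :=
  #|[set X : {set T} | induced_iso e h X]|.

Definition components (T : finType) (e : rel T) : {set {set T}} :=
  [set [set y | connect e x y] | x : T].

Definition path_component (T : finType) (e : rel T) (C : {set T}) : bool :=
  (C \in components e) && induced_iso e (@path_rel #|C|) C.

Definition has_cycle_len (T : finType) (e : rel T) (c : nat) : Prop :=
  3 <= c /\ exists f : 'I_c -> T, injective f /\
    forall i : 'I_c, forall j : 'I_c, (j : nat) = (i.+1 %% c) -> e (f i) (f j).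

(* Main.v *)
Require Import Defs.
From mathcomp Require Import all_boot.
From mathcomp Require Import zify.
Set Implicit Arguments. Unset Strict Implicit. Unset Printing Implicit Defensive.

Section G.
Variables (T : finType) (e : rel T).
Hypotheses (esym : symmetric e) (eirr : irreflexive e)
  (Hdeg : forall x, deg e x <= 2).

Lemma nb2 x y z w : e x y -> e x z -> e x w -> y != z -> (w == y) || (w == z).
Proof.
move=> exy exz exw nyz; apply/negPn/negP; rewrite negb_or => /andP[nwy nwz].
have: #|y |: (z |: [set w])| <= 2.
  apply: leq_trans (Hdeg x); apply: subset_leq_card; apply/subsetP => u.
  by rewrite !inE => /or3P[] /eqP->.
rewrite !cardsU1 cards1 !inE negb_or nyz.
by rewrite (eq_sym z w) (eq_sym y w) nwy nwz.
Qed.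

Section Cyc.
Variables (c : nat) (f : 'I_c.+1 -> T).
Hypotheses (finj : injective f)
  (fadj : forall i j : 'I_c.+1, (j : nat) = i.+1 %% c.+1 -> e (f i) (f j))
  (c2 : 1 < c).
Local Notation C := c.+1.
Definition rr (x : nat) := if x < C then x else x - C.
Let F (x : nat) := f (inord x).

Lemma Finj x y : x < C -> y < C -> F x = F y -> x = y.
Proof.
move=> hx hy /finj /(congr1 val); rewrite /= !inordK //.
Qed.

Lemma rrlt x : x < C + C -> rr x < C.
Proof. by rewrite /rr; case: (ltnP x C); lia. Qed.

Lemma adjF x : x < C -> e (F x) (F (rr x.+1)).
Proof.
move=> hx; apply: fadj.
have h1 : rr x.+1 < C by apply: rrlt; lia.
rewrite (inordK h1) (inordK hx) /rr; case: (ltnP x.+1 C) => h.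
  by rewrite modn_small.
have -> : x.+1 = C by lia.
by rewrite modnn; lia.
Qed.

Ltac rrcase := rewrite /rr; repeat match goal with |- context [if ?a < ?b then _ else _] => case: (ltnP a b) end.

Lemma nbF x w : x < C -> e (F x) w -> (w == F (rr x.+1)) || (w == F (rr (x + C - 1))).
Proof.
move=> hx exw; apply: (nb2 _ _ exw).
- exact: adjF.
- rewrite esym.
  have h : rr (x + C - 1) < C by apply: rrlt; lia.
  have := adjF h.
  have -> : rr (rr (x + C - 1)).+1 = x by rrcase; lia.
  by [].
- apply/eqP => /Finj; rewrite !rrlt; try lia.
  by rrcase; lia.
Qed.

Lemma cycle_many k : 0 < k -> k < C -> k < s_count e (@path_rel k).
Proof.
move=> k0 kC.
pose X (i : 'I_k.+1) := [set F (rr (i + a)) | a : 'I_k].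
have Xinj : injective X.
  suff H : forall i j : 'I_k.+1, i < j -> X i != X j.
    move=> i j hij; apply/eqP; case: (ltngtP i j) => h.
    - by move/H: h; rewrite hij eqxx.
    - by move/H: h; rewrite hij eqxx.
    - by apply/eqP/val_inj.
  move=> i j hij; apply/negP => /eqP E.
  have jpos : 0 < (j : nat) by lia.
  have : F (j.-1) \in X i.
    have ha : j.-1 - i < k by have := ltn_ord j; lia.
    apply/imsetP; exists (Ordinal ha) => //=.
    congr F; rrcase; have := ltn_ord j; lia.
  rewrite E => /imsetP [a _] h.
  have := ltn_ord a; have := ltn_ord j => hj ha.
  have := Finj _ _ h; rewrite rrlt; last by lia.
  have -> : j.-1 < C by lia.
  move=> /(_ isT isT); rrcase; lia.
have sub : [set X i | i : 'I_k.+1] \subset [set X : {set T} | induced_iso e (@path_rel k) X].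
  apply/subsetP => Y /imsetP [i _ ->]; rewrite inE.
  apply/existsP; exists [ffun a : 'I_k => F (rr (i + a))].
  apply/and3P; split.
  - apply/injectiveP => a b; rewrite !ffunE => h.
    have := ltn_ord a; have := ltn_ord b; have := ltn_ord i => hi hb ha.
    have := Finj _ _ h; rewrite !rrlt; try lia.
    move=> /(_ isT isT) h2; apply: val_inj => /=; move: h2; rrcase; lia.
  - apply/eqP/setP => y; apply/imsetP/imsetP => -[a _ ->]; exists a => //; by rewrite ffunE.
  - apply/forallP => a; apply/forallP => b; rewrite !ffunE /path_rel.
    have := ltn_ord a; have := ltn_ord b; have := ltn_ord i => hi hb ha.
    apply/eqP; apply/idP/idP.
    + move=> /nbF; rewrite rrlt; last by lia.
      move=> /(_ isT) /orP[] /eqP h; have := Finj _ _ h;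
        move=> /(_ ltac:(rrcase; lia) ltac:(rrcase; lia)); rrcase; lia.
    + move=> /orP[] /eqP h.
      * have := adjF (rrlt (_ : i + a < C + C)).
        have -> : rr (rr (i + a)).+1 = rr (i + b) by rrcase; lia.
        by apply; lia.
      * rewrite esym; have := adjF (rrlt (_ : i + b < C + C)).
        have -> : rr (rr (i + b)).+1 = rr (i + a) by rrcase; lia.
        by apply; lia.
have := subset_leq_card sub; rewrite card_imset // card_ord cardsE.
by rewrite /s_count cardsE.
Qed.

Lemma two_nb (i : 'I_C) : exists y z, [/\ e (f i) y, e (f i) z & y != z].
Proof.
have hi := ltn_ord i.
have fi : f i = F i by rewrite /F inord_val.
exists (F (rr i.+1)), (F (rr (i + C - 1))); rewrite fi; split.
- exact: adjF.
- rewrite esym.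
  have h : rr (i + C - 1) < C by apply: rrlt; lia.
  have := adjF h.
  have -> : rr (rr (i + C - 1)).+1 = i by rrcase; lia.
  by [].
- apply/eqP => /Finj; rewrite !rrlt; try lia.
  by move=> /(_ isT isT); rrcase; lia.
Qed.
End Cyc.

Definition okp (s : seq T) := uniq s && (if s is a :: r then path e a r else false).

Lemma longest x : exists p, [/\ okp p, x \in p & forall s, okp s -> x \in s -> size s <= size p].
Proof.
pose P n := [exists t : n.-tuple T, okp t && (x \in t)].
have exP : exists n, P n.
  exists 1; apply/existsP; exists [tuple x]; by rewrite /okp /= inE eqxx.
have ubP : forall n, P n -> n <= #|T|.
  move=> n /existsP [t /andP [/andP [ut _] _]].
  by rewrite -(size_tuple t) -(card_uniqP ut) max_card.
case: (ex_maxnP exP ubP) => n /existsP [t /andP [okt xt]] mx.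
exists t; split => // s oks xs.
rewrite size_tuple; apply: mx; apply/existsP; exists (in_tuple s); by rewrite /= oks xs.
Qed.

Section Long.
Variables (x : T) (p : seq T).
Hypotheses (okp_p : okp p) (xp : x \in p)
  (mxp : forall s, okp s -> x \in s -> size s <= size p).
Local Notation n := (size p).
Local Notation q i := (nth x p i).

Lemma up : uniq p. Proof. by case/andP: okp_p. Qed.

Lemma npos : 0 < n. Proof. by case: p xp. Qed.

Lemma adj j : j.+1 < n -> e (q j) (q j.+1).
Proof.
case/andP: okp_p; case: p => [//|a r] _ /= pth hj.
by move/pathP: pth => /(_ x j hj).
Qed.

Lemma qinj i j : i < n -> j < n -> q i = q j -> i = j.
Proof. move=> hi hj /eqP; rewrite nth_uniq ?up //; by move/eqP. Qed.

Lemma ext0 w : e (q 0) w -> w \in p.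
Proof.
move=> h; apply/negPn/negP => wp.
have : size (w :: p) <= n.
  apply: mxp; last by rewrite inE xp orbT.
  case/andP: okp_p; case: p wp h => [//|a r] wp h ur pth.
  rewrite /okp; apply/andP; split; first by rewrite cons_uniq wp ur.
  by rewrite /= esym h pth.
by rewrite /= ltnn.
Qed.

Lemma extL w : e (q n.-1) w -> w \in p.
Proof.
move=> h; apply/negPn/negP => wp.
have : size (rcons p w) <= n.
  apply: mxp; last by rewrite mem_rcons inE xp orbT.
  case/andP: okp_p; case: p wp h => [//|a r] wp h ur pth.
  rewrite /okp; apply/andP; split; first by rewrite rcons_uniq wp ur.
  rewrite /= rcons_path pth /=.
  by move: h; rewrite (nth_last x (a :: r)).
by rewrite size_rcons ltnn.
Qed.

Lemma interior i w : 0 < i -> i.+1 < n -> e (q i) w -> (w == q i.-1) || (w == q i.+1).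
Proof.
move=> i0 hi h; apply: (nb2 _ _ h).
- rewrite esym; have := adj (_ : i.-1.+1 < n); rewrite prednK //; apply; lia.
- exact: adj.
- apply/negP => /eqP /qinj; lia.
Qed.

Lemma closedp y w : y \in p -> e y w -> w \in p.
Proof.
move=> yp; rewrite -(nth_index x yp); have : index y p < size p by rewrite index_mem.
move: (index y p) => i hi h.
have [i0|[i0|i0]] : i = 0 \/ i = n.-1 \/ (0 < i /\ i.+1 < n) by lia.
- by move: h; rewrite i0; apply: ext0.
- by move: h; rewrite i0; apply: extL.
- case: i0 => i0 i1; case/orP: (interior i0 i1 h) => /eqP ->; apply: mem_nth => //.
  exact: leq_ltn_trans (leq_pred i) (ltnW i1).
Qed.

Lemma edges i j : i < n -> j < n -> e (q i) (q j) ->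
  [|| i.+1 == j, j.+1 == i, (i == 0) && (j == n.-1) | (j == 0) && (i == n.-1)].
Proof.
move=> hi hj h.
have [[i0 i1]|ib] : (0 < i /\ i.+1 < n) \/ (i = 0 \/ i = n.-1) by lia.
  by case/orP: (interior i0 i1 h) => /eqP /qinj; lia.
have [[j0 j1]|jb] : (0 < j /\ j.+1 < n) \/ (j = 0 \/ j = n.-1) by lia.
  by rewrite esym in h; case/orP: (interior j0 j1 h) => /eqP /qinj; lia.
have nij : i != j by apply/eqP => eij; move: h; rewrite eij eirr.
lia.
Qed.

Lemma conn_q i j : i <= j -> j < n -> connect e (q i) (q j).
Proof.
move=> hij; elim: j hij => [|j IH] hij hj.
  by have -> : i = 0 by lia.
case: (ltnP i j.+1) => h.
  apply: connect_trans (IH _ _) (connect1 (adj hj)); lia.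
by have -> : i = j.+1 by lia.
Qed.

Lemma Deq : [set y | connect e x y] = [set y in p].
Proof.
apply/setP => y; rewrite !inE; apply/idP/idP.
- move=> cxy; rewrite -(closed_connect _ cxy) // => u w euw.
  apply/idP/idP; first by move=> up'; apply: closedp euw.
  by move=> wp; apply: closedp wp _; rewrite esym.
- move=> yp; rewrite -{1}(nth_index x xp) -(nth_index x yp).
  have : index y p < size p by rewrite index_mem.
  have : index x p < size p by rewrite index_mem.
  move: (index x p) (index y p) => i j hi hj.
  case: (leqP i j) => h; first exact: conn_q h hj.
  rewrite (sym_connect_sym esym); exact: conn_q (ltnW h) hi.
Qed.

End Long.

Lemma comp_class x : path_component e [set y | connect e x y] \/
  exists c (f : 'I_c.+1 -> T), [/\ injective f,
     (forall i j : 'I_c.+1, (j:nat) = i.+1 %% c.+1 -> e (f i) (f j)), 1 < c &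
     [set y | connect e x y] = [set f i | i : 'I_c.+1]].
Proof.
have Dc : [set y | connect e x y] \in components e by apply/imsetP; exists x.
have [p [okp_p xp mxp]] := longest x.
have up' := up okp_p.
have np := npos xp.
rewrite (Deq okp_p xp mxp) in Dc *.
have cardD : #|[set y in p]| = size p by rewrite cardsE; apply/card_uniqP.
case: (boolP (e (nth x p 0) (nth x p (size p).-1) && (2 < size p))) => hc.
- right; case/andP: hc => chord n3.
  have E : (size p).-1.+1 = size p by rewrite prednK.
  exists (size p).-1, (fun i => nth x p i); split.
  + move=> i j /(qinj okp_p).
    have hi : (i : nat) < size p := leq_trans (ltn_ord i) (eq_leq E).
    have hj : (j : nat) < size p := leq_trans (ltn_ord j) (eq_leq E).
    by move=> /(_ hi hj) /val_inj.
  + move=> i j hj; have hi : (i : nat) < size p := leq_trans (ltn_ord i) (eq_leq E).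
    case: (ltnP i.+1 (size p)) => h.
      have -> : (j : nat) = i.+1.
        by rewrite hj modn_small // (leq_trans h (eq_leq (sym_equal E))).
      exact: adj.
    have ei : (i : nat).+1 = (size p).-1.+1.
      by apply: (etrans _ (sym_equal E)); apply/eqP; rewrite eqn_leq h hi.
    rewrite ei modnn in hj; rewrite hj.
    have -> : (i : nat) = (size p).-1 by case: ei.
    by rewrite esym.
  + by rewrite -subn1 ltn_subRL.
  + apply/setP => y; rewrite inE; apply/idP/imsetP.
    * move=> yp; have hy : index y p < (size p).-1.+1 by rewrite E index_mem.
      by exists (Ordinal hy) => //=; rewrite nth_index.
    * by case=> i _ ->; apply: mem_nth; exact: leq_trans (ltn_ord i) (eq_leq E).
- left; apply/andP; split => //.
  apply/existsP; exists [ffun i : 'I_#|[set y in p]| => nth x p i].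
  apply/and3P; split.
  + apply/injectiveP => i j; rewrite !ffunE.
    have hi : (i : nat) < size p := leq_trans (ltn_ord i) (eq_leq cardD).
    have hj : (j : nat) < size p := leq_trans (ltn_ord j) (eq_leq cardD).
    by move=> /(qinj okp_p hi hj) /val_inj.
  + apply/eqP/setP => y; rewrite inE; apply/imsetP/idP.
    * by case=> i _ ->; rewrite ffunE; apply: mem_nth; rewrite -cardD.
    * move=> yp; have hy : index y p < #|[set y in p]| by rewrite cardD index_mem.
      by exists (Ordinal hy) => //=; rewrite ffunE nth_index.
  + apply/forallP => u; apply/forallP => v; rewrite !ffunE /path_rel.
    have hu : (u : nat) < size p := leq_trans (ltn_ord u) (eq_leq cardD).
    have hv : (v : nat) < size p := leq_trans (ltn_ord v) (eq_leq cardD).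
    apply/eqP; apply/idP/idP.
    * move=> h.
      have nuv : (u : nat) != v by apply/eqP => euv; move: h; rewrite euv eirr.
      case/or4P: (edges okp_p xp hu hv h) => [h1|h1|/andP[/eqP u0 /eqP v0]|/andP[/eqP v0 /eqP u0]].
      - by rewrite h1.
      - by rewrite h1 orbT.
      - move: h hc; rewrite u0 v0 => -> /=.
        rewrite -leqNgt => h2; apply/orP; left; apply/eqP; move: nuv; rewrite u0 v0; lia.
      - move: h hc; rewrite u0 v0 esym => -> /=.
        rewrite -leqNgt => h2; apply/eqP; move: nuv; rewrite u0 v0; lia.
    * case/orP => /eqP h.
      - rewrite -h; apply: (adj x okp_p); by rewrite h.
      - rewrite esym -h; apply: (adj x okp_p); by rewrite h.
Qed.
End G.

Theorem lemma4p5 (T : finType) (e : rel T) (k : nat) :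
  symmetric e -> irreflexive e ->
  maxdeg e = 2 ->
  0 < k ->
  #|[set C : {set T} | path_component e C && (k.-1 <= #|C|)]| = 1 ->
  s_count e (@path_rel k) <= k ->
  (~ exists c, k < c /\ has_cycle_len e c) /\
  (forall C : {set T}, path_component e C -> k.-1 <= #|C| ->
     #|C| = s_count e (@path_rel k) + k.-1).
Proof.
move=> esym eirr md2 k0 uniqC sk.
have Hdeg : forall x, deg e x <= 2.
  by move=> x; rewrite -md2 /maxdeg; apply: leq_bigmax_cond.
have part1 : ~ exists c, k < c /\ has_cycle_len e c.
  case=> c [kc [c3 [f [finj fadj]]]].
  destruct c as [|c]; first by [].
  have := cycle_many esym Hdeg finj fadj (_ : 1 < c) k0 kc.
  by move=> /(_ ltac:(lia)); lia.
split => // C pc kC.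
move: (pc) => /andP [Ccomp /existsP [psi /and3P [/injectiveP psiinj /eqP psiim /forallP psiE]]].
have psiE' : forall u v, e (psi u) (psi v) = path_rel u v.
  by move=> u v; move/forallP: (psiE u) => /(_ v) /eqP.
set n := #|C| in psi psiinj psiim psiE psiE' kC *.
suff -> : s_count e (@path_rel k) = n.+1 - k by lia.
have shP : forall (m : 'I_(n.+1 - k)) (a : 'I_k), m + a < n.
  by move=> m a; have := ltn_ord m; have := ltn_ord a; lia.
pose sh m a := Ordinal (shP m a).
pose Y m := [set psi (sh m a) | a : 'I_k].
pose a0 : 'I_k := Ordinal k0.
have Yinj : injective Y.
  suff H : forall m m', Y m = Y m' -> (m' : nat) <= m.
    by move=> m m' h; apply: val_inj; apply/eqP; rewrite eqn_leq H // H.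
  move=> m m' h; have : psi (sh m a0) \in Y m' by rewrite -h; apply/imsetP; exists a0.
  case/imsetP => b _ /psiinj /(congr1 val) /=; lia.
have Yiso : forall m, induced_iso e (@path_rel k) (Y m).
  move=> m; apply/existsP; exists [ffun a => psi (sh m a)]; apply/and3P; split.
  - apply/injectiveP => a b; rewrite !ffunE => /psiinj /(congr1 val) /= h.
    by apply/val_inj/eqP; rewrite -(eqn_add2l m) h.
  - apply/eqP/setP => y; apply/imsetP/imsetP => -[a _ ->]; exists a => //; by rewrite ffunE.
  - apply/forallP => a; apply/forallP => b; rewrite !ffunE psiE' /path_rel /=.
    by rewrite -!addnS !eqn_add2l.
have XC : forall X, induced_iso e (@path_rel k) X -> X \subset C.
  move=> X /existsP [phi /and3P [/injectiveP phiinj /eqP phiim /forallP phiE]].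
  have phiE' : forall u v, e (phi u) (phi v) = path_rel u v.
    by move=> u v; move/forallP: (phiE u) => /(_ v) /eqP.
  set x0 := phi a0.
  have cX : forall j (hj : j < k), connect e x0 (phi (Ordinal hj)).
    elim=> [|j IH] hj.
      by rewrite (_ : Ordinal hj = a0) ?connect0 //; apply: val_inj.
    apply: connect_trans (IH (ltnW hj)) (connect1 _).
    by rewrite phiE' /path_rel /= eqxx.
  have XD : X \subset [set y | connect e x0 y].
    apply/subsetP => y; rewrite -phiim => /imsetP [a _ ->]; rewrite inE.
    by have := cX a (ltn_ord a); rewrite (_ : Ordinal _ = a) //; apply: val_inj.
  have cardX : #|X| = k by rewrite -phiim card_imset // cardsT card_ord.
  case: (comp_class esym eirr Hdeg x0) => [pD | [c [f [finj fadj c2 Df]]]].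
  - have kD : k.-1 <= #|[set y | connect e x0 y]| by have := subset_leq_card XD; lia.
    move/eqP/cards1P: uniqC => [Z HZ].
    have : C \in [set C | path_component e C & k.-1 <= #|C|] by rewrite inE pc kC.
    have : [set y | connect e x0 y] \in [set C | path_component e C & k.-1 <= #|C|].
      by rewrite inE pD kD.
    by rewrite HZ !inE => /eqP DZ /eqP CZ; rewrite CZ -DZ.
  - exfalso.
    have cD : #|[set y | connect e x0 y]| = c.+1 by rewrite Df card_imset // card_ord.
    have ck : c.+1 <= k.
      rewrite leqNgt; apply/negP => kc.
      by have := cycle_many esym Hdeg finj fadj c2 k0 kc; lia.
    have XeqD : X = [set y | connect e x0 y].
      by apply/eqP; rewrite eqEcard XD cD cardX ck.
    have x0D : x0 \in [set y | connect e x0 y] by rewrite inE connect0.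
    rewrite Df in x0D; case/imsetP: x0D => i _ x0i.
    case: (two_nb esym finj fadj c2 i) => y [z [ey ez nyz]].
    have yX : y \in X by rewrite XeqD inE x0i; exact: connect1.
    have zX : z \in X by rewrite XeqD inE x0i; exact: connect1.
    move: yX zX; rewrite -phiim => /imsetP [u _ yu] /imsetP [v _ zv].
    move: ey ez; rewrite -x0i yu zv /x0 !phiE' /path_rel /= => hu hv.
    have u1 : (u : nat) = 1 by move: hu; case/orP => /eqP; lia.
    have v1 : (v : nat) = 1 by move: hv; case/orP => /eqP; lia.
    have uv : u = v by apply: val_inj; rewrite /= u1 v1.
    by move: nyz; rewrite yu zv uv eqxx.
have XY : forall X, induced_iso e (@path_rel k) X -> exists m, X = Y m.
  move=> X hX; have XsC := XC X hX.
  move: hX => /existsP [phi /and3P [/injectiveP phiinj /eqP phiim /forallP phiE]].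
  have phiE' : forall u v, e (phi u) (phi v) = path_rel u v.
    by move=> u v; move/forallP: (phiE u) => /(_ v) /eqP.
  have : forall a, exists u, psi u = phi a.
    move=> a; have : phi a \in C.
      by apply: (subsetP XsC); rewrite -phiim; apply/imsetP; exists a.
    by rewrite -psiim => /imsetP [u _ ->]; exists u.
  case/fin_all_exists => sg Hsg.
  have sginj : injective sg.
    by move=> a b h; apply: phiinj; rewrite -!Hsg h.
  have sgE : forall a b, path_rel (sg a) (sg b) = path_rel a b.
    by move=> a b; rewrite -psiE' !Hsg phiE'.
  pose S j := (sg (insubd a0 j) : nat).
  have vS : forall j, j < k -> val (insubd a0 j) = j.
    by move=> j hj; rewrite val_insubd hj.
  have step : forall j, j.+1 < k -> (S j).+1 = S j.+1 \/ (S j.+1).+1 = S j.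
    move=> j hj; have := sgE (insubd a0 j) (insubd a0 j.+1).
    rewrite /path_rel !vS ?eqxx //=; last by lia.
    by case/orP => /eqP; [left|right].
  have bound : forall i j, i <= j -> j < k -> S j <= S i + (j - i) /\ S i <= S j + (j - i).
    move=> i; elim=> [|j IH] hij hj.
      have -> : i = 0 by lia.
      by split; rewrite subnn addn0.
    case: (ltnP i j.+1) => h.
      have [h1 h2] := IH (ltac:(lia)) (ltac:(lia)).
      case: (step j hj); lia.
    have -> : i = j.+1 by lia.
    by split; rewrite subnn addn0.
  have Sv : forall b : 'I_k, S b = sg b by move=> b; rewrite /S valKd.
  case: (@arg_minnP _ a0 predT (fun a => (sg a : nat)) isT) => amin _ Hmin.
  have ub : forall b : 'I_k, (sg b : nat) <= sg amin + k.-1.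
    move=> b; have := ltn_ord b; have := ltn_ord amin => ha hb.
    case: (leqP (amin : nat) b) => h.
      by have := bound _ _ h hb; rewrite !Sv; lia.
    by have := bound _ _ (ltnW h) ha; rewrite !Sv; lia.
  have lb : forall b : 'I_k, (sg amin : nat) <= sg b by move=> b; apply: Hmin.
  have tP : forall b : 'I_k, sg b - sg amin < k.
    by move=> b; have := ub b; have := lb b; lia.
  pose tau b := Ordinal (tP b).
  have tinj : injective tau.
    move=> b b' /(congr1 val) /= h; apply: sginj; apply: val_inj => /=.
    by have := lb b; have := lb b'; lia.
  case: (injF_bij tinj) => g _ tg.
  have hk : k.-1 < k by lia.
  have hm : sg amin < n.+1 - k.
    have := tg (Ordinal hk); move/(congr1 val) => /= h.
    by have := ltn_ord (sg (g (Ordinal hk))); have := lb (g (Ordinal hk)); lia.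
  exists (Ordinal hm); apply/setP => y; apply/idP/imsetP.
  - rewrite -phiim => /imsetP [b _ ->]; exists (tau b) => //.
    rewrite -Hsg; apply: congr1; apply: val_inj => /=.
    by have := lb b; lia.
  - case=> a _ ->; rewrite -phiim; apply/imsetP; exists (g a) => //.
    rewrite -Hsg; apply: congr1; apply: val_inj => /=.
    have := tg a; move/(congr1 val) => /= h.
    by have := lb (g a); lia.
have -> : s_count e (@path_rel k) = #|[set Y m | m : 'I_(n.+1 - k)]|.
  rewrite /s_count; apply: eq_card => X; rewrite inE; apply/idP/imsetP.
  - by move/XY => [m ->]; exists m.
  - by case=> m _ ->.
by rewrite card_imset // card_ord.
Qed.
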